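(* Let $0<\beta<1$. There exists a positive strictly increasing function $\eta_1:(0,\infty)\to(0,\infty)$ depending only on $\beta$ such that the following holds. Let $T>0$, $c>0$, $F\in C^0([0,T];[0,\infty))$ and $u\in C^1([0,T];[0,\infty))$ with $$F(t)\ge c\,t^{\frac\beta{1-\beta}},\qquad \dot u(t)\ge F(t)-2u^\beta(t)\quad\text{on }[0,T].$$ Then $u(t)\ge\eta_1(c)\,t^{\frac1{1-\beta}}$ for all $t\in[0,T]$. *)

(* Defs.v *)
From HB Require Import structures.
From mathcomp Require Import all_boot all_order all_algebra.
From mathcomp Require Import all_classical all_reals all_analysis.

(* Main.v *)
Require Import Defs.
Set Warnings "-all".
From HB Require Import structures.
From mathcomp Require Import all_boot all_order all_algebra.
From mathcomp Require Import all_classical all_reals all_analysis.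
From mathcomp Require Import ring lra.
Import Order.TTheory GRing.Theory Num.Theory.
Import numFieldNormedType.Exports.
Local Open Scope classical_set_scope.
Local Open Scope ring_scope.

Lemma g_is_derive (R : realType) (u : R -> R) (eta p x : R) (x0 : 0 < x)
  (du : derivable u x 1) :
  is_derive x 1 (fun y => u y - eta * y `^ p)
    ('D_1 u x - eta * (p * x `^ (p - 1))).
Proof.
have Hu := derivableP du.
have Hw := is_derive1_powR p x0.
have := is_deriveB Hu (is_deriveZ eta Hw).
have -> : (u - eta \*: (@powR R)^~ p) = (fun y => u y - eta * y `^ p).
  by apply/funext => y.
by [].
Qed.

Lemma g_cvg0 (R : realType) (u : R -> R) (eta p : R) (p0 : 0 < p)
  (du : derivable u 0 1) :
  (fun y => u y - eta * y `^ p) @ 0^'+ --> u 0 - eta * 0 `^ p.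
Proof.
rewrite powR0 ?gt_eqF//.
apply: cvgB.
  apply: cvg_at_right_filter.
  exact/differentiable_continuous/derivable1_diffP.
have := cvgMl_tmp (a:=eta) (powR_cvg0 p0); rewrite mulr0; apply; exact: _.
Qed.

Lemma cmp (R : realType) (beta eta c T : R) (F u : R -> R) :
  0 < beta -> beta < 1 -> 0 < eta ->
  2 * eta `^ beta + eta * (1 / (1 - beta)) < c ->
  (forall t, t \in `[0, T] -> derivable u t 1) ->
  (forall t, t \in `[0, T] -> 0 <= u t) ->
  (forall t, t \in `[0, T] -> c * t `^ (beta / (1 - beta)) <= F t) ->
  (forall t, t \in `[0, T] -> F t - 2 * (u t) `^ beta <= derive1 u t) ->
  forall t, t \in `[0, T] -> eta * t `^ (1 / (1 - beta)) <= u t.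
Proof.
move=> b0 b1 e0 hc du u0 hF hu t tT.
have b1' : 0 < 1 - beta by rewrite subr_gt0.
set p := 1 / (1 - beta).
have p0 : 0 < p by rewrite divr_gt0.
have hc' : 2 * eta `^ beta + eta * p < c by [].
have pm1 : p - 1 = beta / (1 - beta).
  by rewrite /p; field; rewrite gt_eqF.
have pb : p * beta = p - 1.
  by rewrite pm1 /p; field; rewrite gt_eqF.
set g := fun y => u y - eta * y `^ p.
have inT : forall x, 0 <= x -> x <= T -> x \in `[0, T].
  by move=> x x0 xT; rewrite in_itv /= x0 xT.
have dg : forall x, 0 < x -> x <= T ->
    is_derive x 1 g ('D_1 u x - eta * (p * x `^ (p - 1))).
  move=> x x0 xT; apply: g_is_derive => //; apply: du; apply: inT => //.
  exact: ltW.
have g0 : 0 <= g 0.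
  rewrite /g powR0 ?gt_eqF// mulr0 subr0; apply: u0; apply: inT => //.
  by move: tT; rewrite in_itv /= => /andP[t0 tT]; apply: le_trans tT.
move: (tT); rewrite in_itv /= => /andP[t0 tT'].
rewrite -subr_ge0; change (0 <= g t).
move: t0; rewrite le_eqVlt => /predU1P[<-//|tpos].
rewrite leNgt; apply/negP => gt0.
have contg : forall x, 0 < x -> x <= T -> {for x, continuous g}.
  move=> x x0 xT; apply/differentiable_continuous/derivable1_diffP.
  by have [] := dg x x0 xT.
have cg : {within `[0, t], continuous g}.
  apply/continuous_within_itvP => //; split.
  - move=> x; rewrite in_itv /= => /andP[x0 xt]; apply: contg => //.
    exact: le_trans (ltW xt) tT'.
  - apply: g_cvg0 => //; apply: du; apply: inT => //.
    exact: le_trans (ltW tpos) tT'.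
  - by apply: cvg_at_left_filter; apply: contg.
have [m mI mmin] := EVT_min (ltW tpos) cg.
have gm : g m < 0.
  by apply: le_lt_trans gt0; apply: mmin; rewrite in_itv /= lexx ltW.
move: (mI); rewrite in_itv /= => /andP[m0 mt].
have mT : m <= T by apply: le_trans tT'.
have mpos : 0 < m.
  move: m0; rewrite le_eqVlt => /predU1P[m0|//].
  by move: gm; rewrite -m0 ltNge g0.
have hnear : \forall x \near m, g x < 0 := cvgr_lt _ (contg m mpos mT) _ gm.
have [e /= ep He] := (nbhs_ballP _ _).1 (hnear _).
set d := Order.min e m.
have d0 : 0 < d by rewrite lt_min ep mpos.
have de : d <= e by rewrite ge_min lexx.
have dm : d <= m by rewrite ge_min lexx orbT.
set a := m - d / 2.
have a0 : 0 < a by rewrite /a; lra.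
have am : a < m by rewrite /a; lra.
have gneg : forall y, a <= y -> y <= m -> g y < 0.
  move=> y ay ym; apply: He; rewrite -ball_normE /= ger0_norm; last by lra.
  by rewrite /a in ay; lra.
set df := fun x => 'D_1 u x - eta * (p * x `^ (p - 1)).
have Hd : forall x, x \in `]a, m[ -> is_derive x 1 g (df x).
  move=> x; rewrite in_itv /= => /andP[ax xm]; apply: dg; lra.
have Hc : {within `[a, m], continuous g}.
  apply: derivable_within_continuous => x; rewrite in_itv /= => /andP[ax xm].
  by have [] := dg x ltac:(lra) ltac:(lra).
have [xi xiI eq] := MVT am Hd Hc.
move: xiI; rewrite in_itv /= => /andP[axi xim].
have xpos : 0 < xi by lra.
have xT : xi <= T by lra.
have xin : xi \in `[0, T] by apply: inT; lra.
have gxi : g xi < 0 by apply: gneg; lra.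
have key : 0 < df xi.
  have hx := hu xi xin; rewrite derive1E in hx.
  have hFx := hF xi xin; rewrite -pm1 in hFx.
  have hUb : u xi `^ beta < eta `^ beta * xi `^ (p - 1).
    have -> : xi `^ (p - 1) = (xi `^ p) `^ beta by rewrite -pb powRrM.
    rewrite -powRM; [|exact: ltW|exact: powR_ge0].
    apply: (@gt0_ltr_powR R beta b0 (u xi) (eta * xi `^ p)).
    - by rewrite nnegrE; apply: u0.
    - by rewrite nnegrE; apply: mulr_ge0; [exact: ltW|exact: powR_ge0].
    - by move: gxi; rewrite /g; lra.
  have X0 : 0 <= xi `^ (p - 1) by apply: powR_ge0.
  have hprod : 0 <= (c - (2 * eta `^ beta + eta * p)) * xi `^ (p - 1).
    by apply: mulr_ge0 => //; lra.
  rewrite /df; nra.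
have amin : g m <= g a by apply: mmin; rewrite in_itv /=; apply/andP; split; lra.
have : 0 < df xi * (m - a) by apply: mulr_gt0 => //; lra.
lra.
Qed.

Theorem lemmaA12 (R : realType) (beta : R) (hb0 : 0 < beta) (hb1 : beta < 1) :
  exists eta1 : R -> R,
    (forall c : R, 0 < c -> 0 < eta1 c) /\
    (forall a b : R, 0 < a -> a < b -> eta1 a < eta1 b) /\
    (forall (T c : R) (F u : R -> R),
       0 < T -> 0 < c ->
       {within `[0, T], continuous F} ->
       (forall t, t \in `[0, T] -> 0 <= F t) ->
       (forall t, t \in `[0, T] -> derivable u t 1) ->
       {within `[0, T], continuous derive1 u} ->
       (forall t, t \in `[0, T] -> 0 <= u t) ->
       (forall t, t \in `[0, T] -> c * t `^ (beta / (1 - beta)) <= F t) ->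
       (forall t, t \in `[0, T] -> F t - 2 * (u t) `^ beta <= derive1 u t) ->
       forall t, t \in `[0, T] -> eta1 c * t `^ (1 / (1 - beta)) <= u t).
Proof.
have b1' : 0 < 1 - beta by rewrite subr_gt0.
have P0 : 0 < 1 / (1 - beta) by rewrite divr_gt0.
have ib : 1 <= 1 / beta by rewrite ler_pdivlMr // mul1r ltW.
pose q := fun c : R => c / ((c + 1) * (2 + 1 / (1 - beta))).
have qpos : forall c, 0 < c -> 0 < q c.
  move=> c c0; rewrite /q divr_gt0 // mulr_gt0 //; lra.
exists (fun c => q c `^ (1 / beta)).
split; [|split].
- by move=> c c0; apply: powR_gt0; apply: qpos.
- move=> a b a0 ab.
  have b0' : 0 < b by lra.
  have qab : q a < q b.
    have -> : q b = q a + (b - a) / ((a + 1) * (b + 1) * (2 + 1 / (1 - beta))).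
      rewrite /q; field.
      by rewrite !gt_eqF //; lra.
    rewrite ltrDl divr_gt0 // ?subr_gt0 // !mulr_gt0 //; lra.
  apply: (@gt0_ltr_powR R (1 / beta) ltac:(lra) (q a) (q b)) => //.
  + by rewrite nnegrE ltW // qpos.
  + by rewrite nnegrE ltW // qpos.
- move=> T c F u T0 c0 _ _ du _ u0 hF hu.
  have Q0 := qpos c c0.
  have hQ : q c * ((c + 1) * (2 + 1 / (1 - beta))) = c.
    rewrite /q divfK //; rewrite gt_eqF // mulr_gt0 //; lra.
  have Q1 : q c <= 1.
    rewrite /q ler_pdivrMr ?mul1r; last by rewrite mulr_gt0 //; lra.
    nra.
  have eb : (q c `^ (1 / beta)) `^ beta = q c.
    rewrite -powRrM.
    have -> : 1 / beta * beta = 1 by rewrite div1r mulVf // gt_eqF.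
    by rewrite powRr1 // ltW.
  have ele : q c `^ (1 / beta) <= q c by apply: ge1r_powR => //; rewrite Q0 Q1.
  move=> t tT.
  apply: (@cmp R beta _ c T F u hb0 hb1 _ _ du u0 hF hu t tT); first by apply: powR_gt0.
  rewrite eb.
  have : q c `^ (1 / beta) * (1 / (1 - beta)) <= q c * (1 / (1 - beta)).
    by rewrite ler_wpM2r // ltW.
  have : 0 < q c * (2 + 1 / (1 - beta)) * c.
    by apply: mulr_gt0 => //; apply: mulr_gt0 => //; lra.
  nra.
Qed.
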